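(* Fix finite sets $\mathcal{R},\mathcal{V},\mathcal{R}',\mathcal{V}'$ with $|\mathcal{R}|=|\mathcal{R}'|$. For any positive integer $k$, any deterministic privacy mechanism $\Delta=(\mathcal{R},\mathcal{V},\mathcal{R}',\mathcal{V}',\Pi,\Delta)$, and any released table $\tau'$ on $(\mathcal{R}',\mathcal{V}')$: $$\tau' \text{ is } k\text{-anonymous} \iff (\Delta,\tau') \text{ is } Pk\text{-anonymous}.$$
   Context: A table on $(\mathcal{R},\mathcal{V})$ ($\mathcal{R},\mathcal{V}$ finite) is a map $\tau:\mathcal{R}\to\mathcal{V}$. Let $\mathcal{T}$ be the set of all tables on $(\mathcal{R},\mathcal{V})$ (''private tables'') and $\mathcal{T}'$ the set of all tables on $(\mathcal{R}',\mathcal{V}')$ (''released tables''). For sets $X,Y$, $X\to Y$ denotes the set of all maps from $X$ to $Y$. A privacy mechanism is a 6-tuple $(\mathcal{R},\mathcal{V},\mathcal{R}',\mathcal{V}',\Pi,\Delta)$ (also just denoted $\Delta$) where $\Pi$ is a random variable uniformly distributed over the bijections $\mathcal{R}\to\mathcal{R}'$ and $\Delta$ is a random variable with values in $\mathcal{T}\to(\mathcal{R}\to\mathcal{V}')$. It is a privacy mechanism from $T$ to $T'$ (random variables on $\mathcal{T}$ and $\mathcal{T}'$) if $T,\Pi,\Delta$ are mutually independent and $\Delta(T)=T'\circ\Pi$. The mechanism is deterministic if for every $\tau\in\mathcal{T}$ there is a unique table $\hat\tau$ with $\Delta(\tau)=\hat\tau$ (with probability one). $k$-anonymity: a released table $\tau'$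 is $k$-anonymous if for every $r'\in\mathcal{R}'$ there are at least $k$ elements $\hat r'\in\mathcal{R}'$ with $\tau'(\hat r')=\tau'(r')$. $Pk$-anonymity: for real $k\ge 1$ and $\tau'\in\mathcal{T}'$, the pair $(\Delta,\tau')$ is $Pk$-anonymous if for every random variable $T$ on $\mathcal{T}$ and $T'$ on $\mathcal{T}'$ such that $\Delta$ is a privacy mechanism from $T$ to $T'$, and every $r\in\mathcal{R}$, $r'\in\mathcal{R}'$, one has $\Pr[\Pi(r)=r'\mid T'=\tau']\le 1/k$.
   Formalization: The implication from Pk-anonymity to k-anonymity holds only for τ′ with Pr[T′=τ′] > 0 for some T, T′ such that Δ is a privacy mechanism from T to T′, and Δ(T)=T′∘Π need only hold with probability one. Apart from conventions, each condition added here is assumed in the paper as well or is needed for the statement above to hold. *)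

(* Defs.v *)
From HB Require Import structures.
From mathcomp Require Import all_boot all_order all_algebra.
From mathcomp Require Import all_classical all_reals all_analysis.
Set Implicit Arguments. Unset Strict Implicit. Unset Printing Implicit Defensive.
Import Order.TTheory GRing.Theory Num.Theory.
Local Open Scope classical_set_scope.
Local Open Scope ring_scope.

Definition table (I U : finType) := {ffun I -> U}.

Definition is_bij {I J : finType} (f : {ffun I -> J}) : bool :=
  injectiveb f && [forall y : J, exists x : I, f x == y].

Definition k_anonymous {R' V' : finType} (k : nat) (t : table R' V') : Prop :=
  forall r' : R', (k <= #|[set r2 : R' | t r2 == t r']|)%N.

Definition tcomp {R R' V' : finType} (t' : table R' V') (pi : {ffun R -> R'})
  : table R V' := [ffun r => t' (pi r)].

Section Prob.
Context {d : measure_display} {Om : measurableType d} {Rr : realType}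
  (P : probability Om Rr).

Definition Pr (A : set Om) : Rr := fine (P A).

(* conditional probability Pr[A | B] (used only when Pr B > 0) *)
Definition condPr (A B : set Om) : Rr := Pr (A `&` B) / Pr B.

Definition frv {A : finType} (X : Om -> A) : Prop :=
  forall a : A, measurable (X @^-1` [set a]).

Definition indep3 {A B C : finType} (X : Om -> A) (Y : Om -> B) (Z : Om -> C)
  : Prop :=
  forall (SA : {set A}) (SB : {set B}) (SC : {set C}),
    P ([set w | X w \in SA] `&` [set w | Y w \in SB] `&` [set w | Z w \in SC])
    = (P [set w | X w \in SA] * P [set w | Y w \in SB]
       * P [set w | Z w \in SC])%E.

Section Mech.
Context {R V R' V' : finType}.

Definition privacy_mechanism (Pi : Om -> {ffun R -> R'})
  (Delta : Om -> {ffun table R V -> table R V'}) : Prop :=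
  [/\ frv Pi,
      (forall pi : {ffun R -> R'},
         P [set w | Pi w = pi] =
         (if is_bij pi then (#|[set f : {ffun R -> R'} | is_bij f]|%:R)^-1
          else 0)%:E)
    & frv Delta].

Definition mechanism_from (Pi : Om -> {ffun R -> R'})
  (Delta : Om -> {ffun table R V -> table R V'})
  (T : Om -> table R V) (T' : Om -> table R' V') : Prop :=
  [/\ frv T, frv T', indep3 T Pi Delta
    & P [set w | Delta w (T w) = tcomp (T' w) (Pi w)] = 1%E].

Definition deterministic (Delta : Om -> {ffun table R V -> table R V'}) : Prop :=
  forall tau : table R V, exists! tauh : table R V',
    P [set w | Delta w tau = tauh] = 1%E.

(* Pk-anonymity of (Delta, tau') (conditional probabilities are only
   required when the conditioning event has positive probability) *)
Definition Pk_anonymous (Pi : Om -> {ffun R -> R'})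
  (Delta : Om -> {ffun table R V -> table R V'}) (k : Rr) (tau' : table R' V')
  : Prop :=
  forall (T : Om -> table R V) (T' : Om -> table R' V'),
    mechanism_from Pi Delta T T' ->
    forall (r : R) (r' : R'),
      0 < Pr [set w | T' w = tau'] ->
      condPr [set w | Pi w r = r'] [set w | T' w = tau'] <= k^-1.

(* tau' can actually be released: it has positive probability for some input *)
Definition releasable (Pi : Om -> {ffun R -> R'})
  (Delta : Om -> {ffun table R V -> table R V'}) (tau' : table R' V') : Prop :=
  exists (T : Om -> table R V) (T' : Om -> table R' V'),
    mechanism_from Pi Delta T T' /\ 0 < Pr [set w | T' w = tau'].

End Mech.
End Prob.

(* Main.v *)
Require Import Defs.
From HB Require Import structures.
From mathcomp Require Import all_boot all_order all_algebra.
From mathcomp Require Import all_classical all_reals all_analysis.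
Set Implicit Arguments. Unset Strict Implicit. Unset Printing Implicit Defensive.

Section Comb.
Context {R V R' V' : finType} (th : table R V') (tp : table R' V') (r : R).

Definition sw (x y z : R') : R' := if z == x then y else if z == y then x else z.

Lemma swK x y : involutive (sw x y).
Proof.
move=> z; rewrite /sw.
have [->|zx] := eqVneq z x.
  by rewrite eqxx; have [->|yx] := eqVneq y x; rewrite ?eqxx ?(negPf yx).
have [->|zy] := eqVneq z y.
  by rewrite eqxx.
by rewrite ?(negPf zx) ?(negPf zy).
Qed.

Lemma tp_sw x y z : tp x = tp y -> tp (sw x y z) = tp z.
Proof.
move=> e; rewrite /sw; case: (eqVneq z x) => [->|_]; first by rewrite e.
by case: (eqVneq z y) => [->|_].
Qed.

Definition Sx (x : R') := [set pi : {ffun R -> R'} |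
  [&& is_bij pi, pi r == x & th == tcomp tp pi]].

Definition SM := [set pi : {ffun R -> R'} | is_bij pi && (th == tcomp tp pi)].

Lemma SM_sum : #|SM| = \sum_x #|Sx x|.
Proof.
rewrite -sum1_card (partition_big (fun pi : {ffun R -> R'} => pi r) predT) //=.
apply: eq_bigr => x _; rewrite -sum1_card; apply: eq_bigl => pi.
by rewrite !inE; case: (is_bij pi); case: (th == _); rewrite ?andbF ?andbT.
Qed.

Lemma Sx_le x y : tp x = tp y -> #|Sx x| <= #|Sx y|.
Proof.
move=> e.
pose f (pi : {ffun R -> R'}) := [ffun a => sw x y (pi a)].
have finj : injective f.
  move=> p q /ffunP h; apply/ffunP => a; have := h a; rewrite !ffunE.
  by move/(can_inj (swK x y)).
rewrite -(card_imset (Sx x) finj); apply: (@subset_leq_card _ (f @: Sx x) (Sx y)).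
apply/fintype.subsetP => q /finset.imsetP [pi]; rewrite inE => /and3P [bp pr /eqP tht] ->.
rewrite inE; apply/and3P; split.
- case/andP: bp => /injectiveP ip /forallP sp; apply/andP; split.
    apply/injectiveP => a b; rewrite !ffunE => /(can_inj (swK x y)); exact: ip.
  apply/forallP => z; have /existsP [a /eqP pa] := sp (sw x y z).
  by apply/existsP; exists a; rewrite ffunE pa swK.
- by rewrite ffunE (eqP pr) /sw eqxx.
- apply/eqP; rewrite tht; apply/ffunP => a; rewrite !ffunE.
  by rewrite tp_sw.
Qed.

Lemma Sx_pos x : 0 < #|Sx x| -> tp x = th r.
Proof.
case/card_gt0P => pi; rewrite inE => /and3P [_ /eqP <- /eqP ->].
by rewrite ffunE.
Qed.

Definition fib (x : R') := [set r2 : R' | tp r2 == tp x].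

Lemma fibE x : #|[set r2 : R' | tp r2 == tp x]%classic| = #|fib x|.
Proof.
apply: eq_card => z; rewrite inE /in_set; exact/asboolP/idP.
Qed.

Lemma comb1 (k : nat) x : k_anonymous k tp -> k * #|Sx x| <= #|SM|.
Proof.
move=> ka; have := ka x; rewrite fibE => {}ka; rewrite SM_sum (bigID (fun z => z \in fib x)) /=.
apply: leq_trans (leq_addr _ _).
apply: (@leq_trans (\sum_(z in fib x) #|Sx x|)).
  by rewrite sum_nat_const leq_mul2r ka orbT.
by apply: leq_sum => z; rewrite inE => /eqP e; apply: Sx_le.
Qed.

Lemma comb2 x : 0 < #|Sx x| -> #|SM| <= #|fib x| * #|Sx x|.
Proof.
move=> pos; rewrite SM_sum (bigID (fun z => z \in fib x)) /=.
rewrite [X in _ + X]big1 ?addn0; last first.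
  move=> z; rewrite inE => nz; apply/eqP; rewrite eqn0Ngt; apply/negP => /Sx_pos e.
  by rewrite e -(Sx_pos pos) eqxx in nz.
rewrite -sum_nat_const; apply: leq_sum => z; rewrite inE => /eqP e.
exact: Sx_le.
Qed.
End Comb.

Set Implicit Arguments. Unset Strict Implicit. Unset Printing Implicit Defensive.
Import Order.TTheory GRing.Theory Num.Theory.
Local Open Scope classical_set_scope.
Local Open Scope ring_scope.

Section Basic.
Context {d : measure_display} {Om : measurableType d} {Rr : realType}
  (P : probability Om Rr).

Lemma PrEf {A : set Om} : measurable A -> P A = (Pr P A)%:E.
Proof. by move=> mA; rewrite /Pr fineK // fin_num_measure. Qed.

Lemma Pr_ge0 (A : set Om) : 0 <= Pr P A.
Proof. exact: fine_ge0 (measure_ge0 P A). Qed.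

Lemma PrT : Pr P setT = 1.
Proof. by rewrite /Pr probability_setT. Qed.

Lemma Pr0 : Pr P set0 = 0.
Proof. by rewrite /Pr measure0. Qed.

Lemma PrU (A B : set Om) : measurable A -> measurable B -> A `&` B = set0 ->
  Pr P (A `|` B) = Pr P A + Pr P B.
Proof.
move=> mA mB AB; have := measureU P mA mB AB.
move=> h; apply: EFin_inj; rewrite EFinD -(PrEf mA) -(PrEf mB).
have mAB : measurable (A `|` B) by exact: measurableU.
by rewrite -(PrEf mAB); exact: h.
Qed.

Lemma Pr_le (A B : set Om) : measurable A -> measurable B -> A `<=` B ->
  Pr P A <= Pr P B.
Proof.
move=> mA mB AB; rewrite -lee_fin -(PrEf mA) -(PrEf mB).
by apply: le_measure; rewrite ?inE.
Qed.

Section Frv.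
Context {A : finType} (X : Om -> A) (hX : frv X).

Lemma meas_seq (s : seq A) : measurable [set w | X w \in s].
Proof.
elim: s => [|a s IH].
  by rewrite (_ : [set w | _] = set0) //; apply/seteqP; split => w //=.
rewrite (_ : [set w | _] = X @^-1` [set a] `|` [set w | X w \in s]).
  exact: measurableU.
apply/seteqP; split => w /=.
  by rewrite in_cons => /orP [/eqP ->|h]; [left|right].
by case=> [->|h]; rewrite in_cons ?eqxx ?h ?orbT.
Qed.

Lemma meas_pred (Q : pred A) : measurable [set w | Q (X w)].
Proof.
rewrite (_ : [set w | _] = [set w | X w \in enum Q]); first exact: meas_seq.
by apply/seteqP; split => w /=; rewrite mem_enum.
Qed.

Definition pX (a : A) := Pr P [set w | X w = a].

Lemma Pr_seq (s : seq A) : uniq s ->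
  Pr P [set w | X w \in s] = \sum_(a <- s) pX a.
Proof.
elim: s => [|a s IH].
  by move=> _; rewrite big_nil (_ : [set w | _] = set0) ?Pr0 //; apply/seteqP; split => w //=.
move=> /= /andP [aNs us]; rewrite big_cons -IH //.
rewrite (_ : [set w | _] = [set w | X w = a] `|` [set w | X w \in s]).
  rewrite PrU //; first exact: hX; first exact: meas_seq.
  apply/seteqP; split => w //= [-> h]; by rewrite h in aNs.
apply/seteqP; split => w /=.
  by rewrite in_cons => /orP [/eqP ->|h]; [left|right].
by case=> [->|h]; rewrite in_cons ?eqxx ?h ?orbT.
Qed.

Lemma Pr_pred (Q : pred A) : Pr P [set w | Q (X w)] = \sum_(a | Q a) pX a.
Proof.
rewrite (_ : [set w | _] = [set w | X w \in enum Q]).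
  by rewrite Pr_seq ?enum_uniq // big_enum.
by apply/seteqP; split => w /=; rewrite mem_enum.
Qed.

Lemma pX_ge0 a : 0 <= pX a.
Proof. exact: Pr_ge0. Qed.

Lemma sum_pX : \sum_a pX a = 1.
Proof.
rewrite -(Pr_pred predT) -PrT; congr (Pr P _).
by apply/seteqP; split.
Qed.

Lemma pX_le (Q : pred A) a : Q a -> pX a <= Pr P [set w | Q (X w)].
Proof.
move=> Qa; apply: Pr_le; [exact: hX|exact: meas_pred|].
by move=> w /= ->.
Qed.

Lemma as1_zero (Q : pred A) : Pr P [set w | Q (X w)] = 1 ->
  forall a, ~~ Q a -> pX a = 0.
Proof.
move=> h1 a nQa.
have : \sum_(b | ~~ Q b) pX b = 0.
  have := sum_pX; rewrite (bigID Q) /= -Pr_pred h1 => h.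
  by apply: (@addrI _ 1); rewrite addr0.
move/eqP; rewrite psumr_eq0; last by move=> b _; exact: pX_ge0.
by move/allP => /(_ a (mem_index_enum a)); rewrite nQa /= => /eqP.
Qed.

Lemma as1_of_zero (Q : pred A) : (forall a, ~~ Q a -> pX a = 0) ->
  Pr P [set w | Q (X w)] = 1.
Proof.
move=> h; rewrite Pr_pred -sum_pX [RHS](bigID Q) /= [X in _ = _ + X]big1 ?addr0 //.
Qed.
End Frv.

Lemma frv_map {A B : finType} (X : Om -> A) (f : A -> B) :
  frv X -> frv (fun w => f (X w)).
Proof.
move=> hX b; rewrite (_ : _ @^-1` _ = [set w | (fun a => f a == b) (X w)]).
  exact: (meas_pred hX (fun a => f a == b)).
by apply/seteqP; split => w /= /eqP.
Qed.

Lemma frv_pair {A B : finType} (X : Om -> A) (Y : Om -> B) :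
  frv X -> frv Y -> frv (fun w => (X w, Y w)).
Proof.
move=> hX hY [a b].
rewrite (_ : _ @^-1` _ = X @^-1` [set a] `&` Y @^-1` [set b]).
  exact: measurableI.
by apply/seteqP; split => w /=; [case=> -> ->|case=> -> ->].
Qed.

Lemma frv_const {A : finType} (a : A) : frv (fun _ : Om => a).
Proof.
move=> b; have [->|ab] := eqVneq a b.
  by rewrite (_ : _ @^-1` _ = setT) //; apply/seteqP; split.
rewrite (_ : _ @^-1` _ = set0) //; apply/seteqP; split => w //= e.
by rewrite e eqxx in ab.
Qed.
End Basic.



Lemma setEq {T : Type} {E : eqType} (f g : T -> E) :
  [set w | f w = g w] = [set w | f w == g w].
Proof. by apply/seteqP; split => w /= /eqP. Qed.

Lemma tcomp_inj {R R' V' : finType} (t1 t2 : table R' V') (pi : {ffun R -> R'}) :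
  is_bij pi -> (tcomp t1 pi == tcomp t2 pi) = (t1 == t2).
Proof.
case/andP => _ /forallP sp; apply/eqP/eqP => [/ffunP h|-> //].
apply/ffunP => x; have /existsP [a /eqP <-] := sp x.
by have := h a; rewrite !ffunE.
Qed.

Section Main.
Context {d : measure_display} {Om : measurableType d} {Rr : realType}
  (P : probability Om Rr).
Context {R V R' V' : finType} (Pi : Om -> {ffun R -> R'})
  (Delta : Om -> {ffun table R V -> table R V'}).
Hypothesis hpm : privacy_mechanism P Pi Delta.
Variable D : {ffun table R V -> table R V'}.
Hypothesis hD : forall tau, P [set w | Delta w tau = D tau] = 1%E.
Variable tp : table R' V'.

Definition cB : Rr := (#|[set f : {ffun R -> R'} | is_bij f]|%:R)^-1.

Lemma frv_Pi : frv Pi. Proof. by case: hpm. Qed.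
Lemma frv_Delta : frv Delta. Proof. by case: hpm. Qed.

Lemma pPi pi : pX P Pi pi = if is_bij pi then cB else 0.
Proof. by rewrite /pX /Pr; case: hpm => _ -> _; case: (is_bij pi). Qed.

Lemma bij_as1 : Pr P [set w | is_bij (Pi w)] = 1.
Proof. by apply: (as1_of_zero frv_Pi) => a /negPf na; rewrite pPi na. Qed.

Lemma D_as1 : Pr P [set w | Delta w == D] = 1.
Proof.
apply: (as1_of_zero frv_Delta (Q := fun f => f == D)) => f fD.
case: (pickP (fun tau => f tau != D tau)) => [tau htau|h]; last first.
  suff fD' : f = D by rewrite fD' eqxx in fD.
  by apply/ffunP => tau; apply/eqP; have := h tau => /negbFE.
apply: (as1_zero frv_Delta (Q := fun g => g tau == D tau)) htau.
by rewrite -setEq /Pr hD.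
Qed.


Lemma set_in1 {A : finType} (f : Om -> A) (a : A) :
  [set w | f w \in [set a]%SET] = [set w | f w = a].
Proof. by apply/seteqP; split => w /=; rewrite inE => /eqP. Qed.

Section Key.
Variables (T : Om -> table R V) (T' : Om -> table R' V').
Hypothesis hmf : mechanism_from P Pi Delta T T'.

Lemma frv_T : frv T. Proof. by case: hmf. Qed.
Lemma frv_T' : frv T'. Proof. by case: hmf. Qed.

Let ZT := (table R V * {ffun R -> R'} * {ffun table R V -> table R V'} * table R' V')%type.
Let Z : Om -> ZT := fun w => (T w, Pi w, Delta w, T' w).
Lemma frv_Z : frv Z.
Proof.
apply: frv_pair; last exact: frv_T'.
apply: frv_pair; last exact: frv_Delta.
apply: frv_pair; [exact: frv_T|exact: frv_Pi].
Qed.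

Lemma pZ0 (z : ZT) : ~~ [&& z.1.2 z.1.1.1 == tcomp z.2 z.1.1.2, z.1.2 == D & is_bij z.1.1.2] ->
  pX P Z z = 0.
Proof.
rewrite negb_and => /orP [h|]; last rewrite negb_and => /orP [h|h].
- apply: (as1_zero frv_Z (Q := fun z : ZT => z.1.2 z.1.1.1 == tcomp z.2 z.1.1.2)) h.
  case: hmf => _ _ _ h1; rewrite /Pr.
  have -> : [set w | (fun z : ZT => z.1.2 z.1.1.1 == tcomp z.2 z.1.1.2) (Z w)] =
    [set w | Delta w (T w) = tcomp (T' w) (Pi w)].
    by apply/seteqP; split => w /= /eqP.
  by rewrite h1.
- apply: (as1_zero frv_Z (Q := fun z : ZT => z.1.2 == D)) h. exact: D_as1.
- apply: (as1_zero frv_Z (Q := fun z : ZT => is_bij z.1.1.2)) h; exact: bij_as1.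
Qed.

Lemma indepTPi tau pi :
  pX P (fun w => (T w, Pi w)) (tau, pi) = pX P T tau * pX P Pi pi.
Proof.
case: hmf => hT _ hI _.
have := hI [set tau]%SET [set pi]%SET [set: {ffun table R V -> table R V'}]%SET.
rewrite (_ : [set w | Delta w \in _] = setT); last first.
  by apply/seteqP; split => w //= _; rewrite inE.
rewrite setIT probability_setT mule1 !set_in1 => h.
rewrite /pX (_ : [set w | (T w, Pi w) = (tau, pi)] =
   [set w | T w = tau] `&` [set w | Pi w = pi]); last first.
  by apply/seteqP; split => w /=; [case=> -> ->|case=> -> ->].
rewrite /Pr h fineM //; apply: fin_num_measure; [exact: hT|exact: frv_Pi].
Qed.

Lemma key (Qp : pred {ffun R -> R'}) :
  Pr P [set w | Qp (Pi w) && (T' w == tp)] =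
  \sum_tau pX P T tau * cB *
     #|[set pi | [&& is_bij pi, Qp pi & D tau == tcomp tp pi]]%SET|%:R.
Proof.
transitivity (\sum_(z | Qp z.1.1.2 && (z.2 == tp)) pX P Z z).
  exact: (Pr_pred P frv_Z (fun z : ZT => Qp z.1.1.2 && (z.2 == tp))).
transitivity (\sum_(z | Qp z.1.1.2 && (D z.1.1.1 == tcomp tp z.1.1.2)) pX P Z z).
  rewrite big_mkcond [RHS]big_mkcond; apply: eq_bigr => z _.
  have [G|nG] := boolP [&& z.1.2 z.1.1.1 == tcomp z.2 z.1.1.2, z.1.2 == D & is_bij z.1.1.2];
    last by rewrite pZ0 // !if_same.
  by case/and3P: G => /eqP h1 /eqP h2 hb; rewrite -h2 h1 tcomp_inj.
transitivity (Pr P [set w | Qp (Pi w) && (D (T w) == tcomp tp (Pi w))]).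
  by symmetry; exact: (Pr_pred P frv_Z (fun z : ZT => Qp z.1.1.2 && (D z.1.1.1 == tcomp tp z.1.1.2))).
transitivity (\sum_(y | Qp y.2 && (D y.1 == tcomp tp y.2)) pX P (fun w => (T w, Pi w)) y).
  exact: (Pr_pred P (frv_pair frv_T frv_Pi) (fun y => Qp y.2 && (D y.1 == tcomp tp y.2))).
transitivity (\sum_tau \sum_pi (if Qp pi && (D tau == tcomp tp pi)
     then pX P T tau * pX P Pi pi else 0)).
  pose F := fun tau pi => if Qp pi && (D tau == tcomp tp pi) then pX P T tau * pX P Pi pi else 0.
  rewrite big_mkcond (eq_bigr (fun y => F y.1 y.2)); last first.
    by move=> [tau pi] _; rewrite /F /= indepTPi.
  symmetry; exact: pair_bigA.
apply: eq_bigr => tau _.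
rewrite mulr_natr -sumr_const [RHS]big_mkcond; apply: eq_bigr => pi _; rewrite inE pPi.
by case: (is_bij pi); case: (Qp pi); case: (D tau == _); rewrite /= ?mulr0.
Qed.

Lemma num_eq r r' : Pr P ([set w | Pi w r = r'] `&` [set w | T' w = tp]) =
  \sum_tau pX P T tau * cB * #|Sx (D tau) tp r r'|%:R.
Proof.
rewrite (_ : _ `&` _ = [set w | (fun pi : {ffun R -> R'} => pi r == r') (Pi w) && (T' w == tp)]).
  exact: key.
by apply/seteqP; split => w /=; [case=> -> ->; rewrite !eqxx|case/andP => /eqP -> /eqP ->].
Qed.

Lemma den_eq : Pr P [set w | T' w = tp] =
  \sum_tau pX P T tau * cB * #|SM (D tau) tp|%:R.
Proof.
rewrite (_ : [set w | T' w = tp] = [set w | predT (Pi w) && (T' w == tp)]).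
  exact: key.
by apply/seteqP; split => w /= /eqP.
Qed.
End Key.

Lemma cB_ge0 : 0 <= cB.
Proof. by rewrite /cB invr_ge0 ler0n. Qed.

Lemma dir1 (k : nat) : (0 < k)%N -> k_anonymous k tp ->
  Pk_anonymous P Pi Delta (k%:R : Rr) tp.
Proof.
move=> hk ka T T' hmf r r' pos.
rewrite /condPr ler_pdivrMr // (num_eq hmf) (den_eq hmf).
rewrite mulrC ler_pdivlMr ?ltr0n // big_distrl; apply: ler_sum => tau _.
rewrite /= -!mulrA -natrM; apply: ler_wpM2l; first exact: pX_ge0.
apply: ler_wpM2l; first exact: cB_ge0.
by rewrite ler_nat mulnC; exact: comb1.
Qed.

Lemma dir2 (k : nat) : (0 < k)%N -> releasable P Pi Delta tp ->
  Pk_anonymous P Pi Delta (k%:R : Rr) tp -> k_anonymous k tp.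
Proof.
move=> hk [T0 [T0' [hmf0 pos0]]] hPk r'.
have [tau0 Mpos] : exists tau0, (0 < #|SM (D tau0) tp|)%N.
  case: (pickP (fun tau => 0 < #|SM (D tau) tp|)%N) => [tau0 h|h]; first by exists tau0.
  move: pos0; rewrite (den_eq hmf0) big1 ?ltxx // => tau _.
  by move/negbT: (h tau); rewrite -leqNgt leqn0 => /eqP ->; rewrite mulr0.
have bij0E := Mpos; case/card_gt0P: bij0E => pi0; rewrite inE => /andP [bij0 /eqP e0].
have hI2 : forall (SB : {set {ffun R -> R'}}) (SC : {set {ffun table R V -> table R V'}}), P ([set w | Pi w \in SB] `&` [set w | Delta w \in SC]) =
    (P [set w | Pi w \in SB] * P [set w | Delta w \in SC])%E.
  move=> SB SC; case: hmf0 => _ _ hI _; have := hI [set: table R V]%SET SB SC.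
  rewrite (_ : [set w | T0 w \in _] = setT); last by apply/seteqP; split => w //= _; rewrite inE.
  by rewrite classical_sets.setTI probability_setT mul1e.
pose T := fun _ : Om => tau0.
pose g := fun pd : {ffun R -> R'} * {ffun table R V -> table R V'} =>
  [ffun x => if [pick a | pd.1 a == x] is Some a then pd.2 tau0 a else tp x] : table R' V'.
pose T' := fun w => g (Pi w, Delta w).
have hmf : mechanism_from P Pi Delta T T'.
  split.
  - exact: frv_const.
  - exact: (frv_map g (frv_pair frv_Pi frv_Delta)).
  - move=> SA SB SC; rewrite /T /=; case: (boolP (tau0 \in SA)) => h.
      rewrite (_ : [set _ : Om | true] = setT); last by apply/seteqP; split => w //.
      by rewrite classical_sets.setTI probability_setT mul1e hI2.
    rewrite (_ : [set _ : Om | false] = set0); last by apply/seteqP; split => w.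
    by rewrite !classical_sets.set0I measure0 !mul0e.
  - have mA : measurable [set w | Delta w (T w) = tcomp (T' w) (Pi w)].
      rewrite (_ : [set w | _] = [set w | (fun pd : {ffun R -> R'} * {ffun table R V -> table R V'} =>
         pd.2 tau0 == tcomp (g pd) pd.1) ((Pi w, Delta w))]).
        exact: (meas_pred (frv_pair frv_Pi frv_Delta) (fun pd : {ffun R -> R'} * {ffun table R V -> table R V'} =>
         pd.2 tau0 == tcomp (g pd) pd.1)).
      by apply/seteqP; split => w /= /eqP.
    rewrite (PrEf P mA); congr EFin; apply/le_anti/andP; split.
      by rewrite -(PrT P); apply: Pr_le.
    rewrite -bij_as1; apply: Pr_le => //; first exact: (meas_pred frv_Pi (fun pi => is_bij pi)).
    move=> w /= hb; apply/ffunP => a; rewrite !ffunE /=.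
    case/andP: hb => /injectiveP inj _.
    case: pickP => [b /eqP hb2|nb]; first by rewrite (inj _ _ hb2).
    by have := nb a; rewrite eqxx.
have pT tau : pX P T tau = (tau == tau0)%:R.
  rewrite /pX /T; case: eqVneq => [->|ne].
    by rewrite -(PrT P); congr (Pr P _); apply/seteqP; split.
  rewrite (_ : [set _ | tau0 = tau] = set0) ?Pr0 //; apply/seteqP; split => w //= e; by rewrite e eqxx in ne.
have sumE (F : table R V -> Rr) : \sum_tau pX P T tau * cB * F tau = cB * F tau0.
  rewrite (bigD1 tau0) //= big1 ?addr0; first by rewrite pT eqxx mul1r.
  by move=> tau ntau; rewrite pT (negbTE ntau) !mul0r.
have bij0' := bij0; case/andP: bij0' => /injectiveP inj0 /forallP /(_ r') /existsP [r /eqP hr].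
have Npos : (0 < #|Sx (D tau0) tp r r'|)%N.
  by apply/card_gt0P; exists pi0; rewrite inE bij0 hr eqxx e0 eqxx.
have cpos : 0 < cB.
  rewrite /cB invr_gt0 ltr0n; apply/card_gt0P; exists pi0.
  by rewrite inE; exact: bij0.
have posd : 0 < Pr P [set w | T' w = tp].
  by rewrite (den_eq hmf) sumE mulr_gt0 // ltr0n.
have := hPk T T' hmf r r' posd; rewrite /condPr (num_eq hmf) (den_eq hmf) !sumE.
rewrite ler_pdivrMr ?mulr_gt0 ?ltr0n // mulrCA ler_pM2l //.
rewrite mulrC ler_pdivlMr ?ltr0n // -natrM ler_nat => h.
have h2 := comb2 Npos.
rewrite fibE -(leq_pmul2r Npos); rewrite mulnC in h; exact: leq_trans h h2.
Qed.
End Main.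

Local Close Scope classical_set_scope.

Theorem theorem2 (R V R' V' : finType) (hcard : #|R| = #|R'|)
  (d : measure_display) (Om : measurableType d) (Rr : realType)
  (P : probability Om Rr)
  (Pi : Om -> {ffun R -> R'}) (Delta : Om -> {ffun table R V -> table R V'})
  (k : nat) (hk : (0 < k)%N) (tau' : table R' V') :
  privacy_mechanism P Pi Delta -> deterministic P Delta ->
  (k_anonymous k tau' -> Pk_anonymous P Pi Delta (k%:R : Rr) tau') /\
  (releasable P Pi Delta tau' ->
     Pk_anonymous P Pi Delta (k%:R : Rr) tau' -> k_anonymous k tau').
Proof.
move=> hpm hdet.
have [D hD] : exists D : {ffun table R V -> table R V'},
    forall tau, P [set w | Delta w tau = D tau]%classic = 1%E.
  have /choice [f hf] : forall tau : table R V, exists tauh : table R V',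
      P [set w | Delta w tau = tauh]%classic = 1%E.
    by move=> tau; case: (hdet tau) => th [h _]; exists th.
  by exists [ffun tau => f tau] => tau; rewrite ffunE.
split; [exact: (dir1 hpm hD)|exact: (dir2 hpm hD)].
Qed.
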